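(* Let $n$ be a positive integer, $g=3n+1$, and let $G$ be a pure $(2n)$-sparse gapset of genus $g$ with depth $q$. Then $G$ is symmetric if and only if $q=4$.
   Context: A gapset is a finite set $G\subset\mathbb{N}=\{1,2,\dots\}$ such that whenever $z\in G$ and $z=x+y$ with $x,y\in\mathbb{N}$, then $x\in G$ or $y\in G$; its genus is $g=\#G$. Write $G=\{\ell_1<\dots<\ell_g\}$. Multiplicity $m(G)=\min\{s\in\mathbb{N}:s\notin G\}$; conductor $c(G)=\min\{s\in\mathbb{N}: s+t\notin G\ \forall t\in\mathbb{N}_0\}$; Frobenius number $F(G)=c(G)-1=\ell_g$; depth $q(G)=\lceil c(G)/m(G)\rceil$. $G$ is symmetric if $F(G)=2g-1$. $G$ is pure $\kappa$-sparse if $\ell_{i+1}-\ell_i\le\kappa$ for all $i$ with equality for some $i$. *)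

(* Defs.v *)
From mathcomp Require Import all_boot.
Set Implicit Arguments. Unset Strict Implicit. Unset Printing Implicit Defensive.

(* A finite subset G of N = {1,2,...} is represented by a duplicate-free
   sequence of naturals (listing its elements in any order). *)

Definition is_gapset (G : seq nat) : Prop :=
  uniq G /\ (forall z, z \in G -> 0 < z) /\
  (forall z x y, z \in G -> 0 < x -> 0 < y -> z = x + y -> x \in G \/ y \in G).

Definition genus (G : seq nat) : nat := size G.

Lemma mem_le_sumn (G : seq nat) z : z \in G -> z <= sumn G.
Proof.
elim: G => [|a G IH] //=; rewrite inE => /orP [/eqP -> | H].
  exact: leq_addr.
by apply: leq_trans (IH H) _; exact: leq_addl.
Qed.

Lemma big_not_in (G : seq nat) (t : nat) : (sumn G).+1 + t \notin G.
Proof.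
apply/negP => /mem_le_sumn H.
by move: H; rewrite addSn ltnNge leq_addr.
Qed.

Lemma mult_ex (G : seq nat) : exists s, (0 < s) && (s \notin G).
Proof. exists ((sumn G).+1 + 0); by rewrite big_not_in. Qed.

Definition multiplicity (G : seq nat) : nat := ex_minn (mult_ex G).

(* conductor c(G) = min { s in N : s + t \notin G for all t in N_0 } *)
Lemma cond_ex (G : seq nat) :
  exists s, (0 < s) && [forall t : 'I_(sumn G).+1, s + t \notin G].
Proof.
exists (sumn G).+1; apply/andP; split => //; apply/forallP => t.
exact: big_not_in.
Qed.

(* The boolean predicate above is equivalent to cond_pred: elements of G are
   at most sumn G, so only t <= sumn G matter. *)
Definition conductor (G : seq nat) : nat := ex_minn (cond_ex G).

Definition frobenius (G : seq nat) : nat := (conductor G).-1.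

(* depth q(G) = ceil(c(G)/m(G)) *)
Definition depth (G : seq nat) : nat :=
  (conductor G + multiplicity G - 1) %/ multiplicity G.

Definition symmetric_gapset (G : seq nat) : Prop :=
  frobenius G = 2 * genus G - 1.

Definition pure_sparse (kappa : nat) (G : seq nat) : Prop :=
  let L := sort leq G in
  (forall i, i.+1 < size L -> nth 0 L i.+1 - nth 0 L i <= kappa) /\
  (exists i, i.+1 < size L /\ nth 0 L i.+1 - nth 0 L i = kappa).

(* Main.v *)
Require Import Defs.
From mathcomp Require Import all_boot.
From mathcomp Require Import zify.

Lemma mult_spec (G : seq nat) : 0 < multiplicity G /\ multiplicity G \notin G /\
  forall x, 0 < x -> x < multiplicity G -> x \in G.
Proof.
rewrite /multiplicity; case: ex_minnP => m /andP[m0 mG] mn.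
split=> //; split=> // x x0 xm; apply/negPn/negP => xn.
by have := mn x; rewrite x0 xn => /(_ isT); rewrite leqNgt xm.
Qed.

Lemma cond_spec (G : seq nat) : G != [::] -> (forall z, z \in G -> 0 < z) ->
  frobenius G \in G /\ forall z, z \in G -> z <= frobenius G.
Proof.
move=> Gne Gpos.
rewrite /frobenius /conductor; case: ex_minnP => c /andP[c0 /forallP Hc] mn.
have Hall : forall t, c + t \notin G.
  move=> t; case: (leqP t (sumn G)) => ht.
    exact: (Hc (Ordinal (ht : t < (sumn G).+1))).
  by apply/negP => /mem_le_sumn; lia.
have lt : forall z, z \in G -> z < c.
  move=> z zG; rewrite ltnNge; apply/negP => cz.
  by have := Hall (z - c); rewrite subnKC // zG.
split; last by move=> z /lt; lia.
case: G Gne Gpos Hc mn Hall lt => // z G' _ Gpos Hc mn Hall lt.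
have z0 := Gpos z (mem_head _ _).
have zc := lt z (mem_head _ _).
apply/negPn/negP => cn.
have : (0 < c.-1) && [forall t : 'I_(sumn (z :: G')).+1, c.-1 + t \notin z :: G'].
  apply/andP; split; first lia.
  apply/forallP => t; case: (nat_of_ord t) => [|t']; first by rewrite addn0.
  by have := Hall t'; have -> : c.-1 + t'.+1 = c + t' by lia.
by move/mn; lia.
Qed.

Lemma count_bound (G : seq nat) F : is_gapset G -> F \in G -> (forall z, z \in G -> z <= F) ->
  F.-1 + count (fun x => (x \in G) && (F - x \in G)) (iota 1 F.-1) <= 2 * (size G).-1.
Proof.
move=> [Gu [Gpos Gsum]] FG Fmax.
have F0 := Gpos F FG.
set s := iota 1 F.-1.
have h1 : count (mem G) s <= (size G).-1.
  rewrite -size_filter.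
  have : size (F :: filter (mem G) s) <= size G.
    apply: uniq_leq_size => /=.
      rewrite filter_uniq ?iota_uniq // andbT mem_filter mem_iota; apply/negP.
      move/andP=> [_ /andP [_]]; lia.
    by move=> x; rewrite inE mem_filter => /orP [/eqP -> // | /andP []].
  rewrite /=; lia.
have h2 : count (fun x => F - x \in G) s <= (size G).-1.
  rewrite -size_filter.
  have : size (F :: map (subn F) (filter (fun x => F - x \in G) s)) <= size G.
    apply: uniq_leq_size => /=.
      apply/andP; split.
        apply/negP => /mapP [x]; rewrite mem_filter mem_iota => /andP [_ /andP [h h']] e.
        lia.
      rewrite map_inj_in_uniq ?filter_uniq ?iota_uniq //.
      move=> x y; rewrite !mem_filter !mem_iota => /andP [_ /andP [h h']] /andP [_ /andP [k k']] e.
      lia.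
    move=> x; rewrite inE => /orP [/eqP -> // | /mapP [y]].
    by rewrite mem_filter => /andP [hy _] ->.
  rewrite /= size_map; lia.
have h3 : count (predU (mem G) (fun x => F - x \in G)) s = F.-1.
  rewrite -[in RHS](size_iota 1 F.-1) -count_predT; apply: eq_in_count => x.
  rewrite mem_iota => /andP [h h'] /=.
  have := Gsum F x (F - x) FG h; rewrite subn_gt0 => /(_ ltac:(lia) ltac:(lia)).
  by case => ->; rewrite ?orbT.
have := count_predUI (mem G) (fun x => F - x \in G) s.
rewrite h3 => H.
have E : count (predI (mem G) (fun x => F - x \in G)) s =
  count (fun x => (x \in G) && (F - x \in G)) s by [].
move: H E h1 h2; set a := count _ _; set b := count _ _; set c := count (fun x : nat => F - x \in G) s; lia.
Qed.

Set Implicit Arguments.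
Unset Strict Implicit.

Lemma sortL_leq (G : seq nat) : sorted leq (sort leq G).
Proof. exact: (sort_sorted leq_total). Qed.

Lemma sortL_ltn (G : seq nat) : uniq G -> sorted ltn (sort leq G).
Proof. by move=> U; rewrite ltn_sorted_uniq_leq sort_uniq U sortL_leq. Qed.

Lemma nth_le (G : seq nat) i j : i <= j -> j < size G ->
  nth 0 (sort leq G) i <= nth 0 (sort leq G) j.
Proof.
move=> hij hj.
apply: (sorted_leq_nth leq_trans leqnn 0 (sortL_leq G)) => //;
  rewrite inE size_sort; lia.
Qed.

Lemma nth_lt (G : seq nat) i j : uniq G -> i < j -> j < size G ->
  nth 0 (sort leq G) i < nth 0 (sort leq G) j.
Proof.
move=> U hij hj.
have H := @sorted_ltn_nth _ ltn ltn_trans 0 (sort leq G) (sortL_ltn U) i j.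
apply: H => //; rewrite !inE /= size_sort; [exact: ltn_trans hij hj | exact: hj].
Qed.

Lemma nth_in (G : seq nat) i : i < size G -> nth 0 (sort leq G) i \in G.
Proof. by move=> h; rewrite -(mem_sort leq) mem_nth // size_sort. Qed.

Lemma between (G : seq nat) i x : i.+1 < size G ->
  nth 0 (sort leq G) i < x -> x < nth 0 (sort leq G) i.+1 -> x \notin G.
Proof.
move=> hi h1 h2; apply/negP; rewrite -(mem_sort leq) => /(nthP 0) [j].
rewrite size_sort => hj ej; change (is_true (j < size G)) in hj.
case: (leqP j i) => hji.
  have hi2 : i < size G by lia.
  by have := nth_le hji hi2; rewrite ej; lia.
by have := nth_le hji hj; rewrite ej; lia.
Qed.

Lemma nth_last (G : seq nat) F : F \in G -> (forall z, z \in G -> z <= F) ->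
  nth 0 (sort leq G) (size G).-1 = F.
Proof.
move=> FG Fmax.
have g0 : 0 < size G by case: G FG {Fmax}.
have := FG; rewrite -(mem_sort leq) => /(nthP 0) [j].
rewrite size_sort => hj ej; change (is_true (j < size G)) in hj.
have h1 : j <= (size G).-1 by lia.
have h2 : (size G).-1 < size G by lia.
have := nth_le h1 h2; rewrite ej.
have := Fmax _ (nth_in h2).
lia.
Qed.

Lemma cond_pos (G : seq nat) : 0 < conductor G.
Proof. by rewrite /conductor; case: ex_minnP => c /andP[]. Qed.

Lemma depth4 (G : seq nat) : depth G = 4 <->
  3 * multiplicity G <= frobenius G /\ frobenius G < 4 * multiplicity G.
Proof.
have [m0 _] := mult_spec G.
have c0 := cond_pos G.
rewrite /depth /frobenius.
move: m0 c0; set c := conductor G; set m := multiplicity G => m0 c0.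
have -> : c + m - 1 = c.-1 + m by lia.
split.
  move=> h.
  have : 4 <= (c.-1 + m) %/ m by rewrite h.
  rewrite leq_divRL // => H1.
  have : (c.-1 + m) %/ m < 5 by rewrite h.
  rewrite ltn_divLR // => H2.
  lia.
move=> [h1 h2]; apply/eqP; rewrite eqn_leq; apply/andP; split.
  rewrite -ltnS ltn_divLR //; lia.
rewrite leq_divRL //; lia.
Qed.

Theorem mainTheorem6 (n : nat) (G : seq nat) :
  0 < n -> is_gapset G -> genus G = 3 * n + 1 -> pure_sparse (2 * n) G ->
  (symmetric_gapset G <-> depth G = 4).
Proof.
move=> n0 Gg gen [sp1 [i [hi hj]]].
have [Gu [Gpos Gsum]] := Gg.
rewrite /genus in gen.
rewrite size_sort gen in sp1 hi.
have Gne : G != [::] by apply/eqP => E; move: gen; rewrite E /=; lia.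
have [FG Fmax] := cond_spec G Gne Gpos.
have [m0 [mG mlt]] := mult_spec G.
have cb := count_bound G (frobenius G) Gg FG Fmax.
rewrite depth4 /symmetric_gapset /genus gen.
rewrite gen in cb.
move: FG Fmax m0 mG mlt cb.
set F := frobenius G; set m := multiplicity G => FG Fmax m0 mG mlt cb.
have F0 := Gpos F FG.
have m2n : 2 * n <= m.
  rewrite leqNgt; apply/negP => hm.
  have hi' : i.+1 < size G by rewrite gen.
  set b := nth 0 (sort leq G) i.+1 in hj.
  have hb : b \in G by apply: nth_in; rewrite gen.
  have hx := @between G i (b - m) hi'.
  rewrite -/b in hx.
  have : b - m \notin G by apply: hx; lia.
  have := Gsum b (b - m) m hb ltac:(lia) m0 ltac:(lia).
  by case=> h; [rewrite h | rewrite h in mG].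
split.
  move=> FE.
  have c0 : count (fun x => (x \in G) && (F - x \in G)) (iota 1 F.-1) = 0 by lia.
  move/eqP: c0; rewrite -leqn0 leqNgt -has_count => /hasPn Hn.
  have hg2 : (3 * n + 1).-2 < (3 * n + 1).-1 by lia.
  have hg1 : (3 * n + 1).-1 < size G by rewrite gen; lia.
  have hl := nth_last FG Fmax; rewrite gen in hl.
  set y := nth 0 (sort leq G) (3 * n + 1).-2.
  have yG : y \in G by apply: nth_in; lia.
  have yF : y < F by rewrite -hl; apply: nth_lt; lia.
  have sp := sp1 (3 * n + 1).-2 ltac:(lia).
  have e : (3 * n + 1).-2.+1 = (3 * n + 1).-1 by lia.
  rewrite e hl -/y in sp.
  have ym : y + m <= F.
    rewrite leqNgt; apply/negP => h.
    have kG : F - y \in G by apply: mlt; lia.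
    have := Hn (F - y); rewrite mem_iota kG.
    have -> : F - (F - y) = y by lia.
    rewrite yG /= => /(_ ltac:(lia)); done.
  lia.
move=> [h1 h2].
have F6 : F <= 6 * n + 1 by lia.
have F6' : F != 6 * n.
  apply/negP => /eqP FE.
  have m2 : m = 2 * n by lia.
  have e3 : F = m + 2 * m by lia.
  have := Gsum F m (2 * m) FG m0 ltac:(lia) e3.
  case; first by rewrite (negbTE mG).
  move=> h2m.
  by have := Gsum (2 * m) m m h2m m0 m0 ltac:(lia); case => h; rewrite h in mG.
lia.
Qed.
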